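(* Let $T$ be a maximally strongly consistent $\mathcal{L}$-theory in $RGL^*$ and let $\varphi,\psi$ be $\mathcal{L}$-sentences with $T\vdash\varphi\vee\psi$. Then $T\vdash\varphi$ or $T\vdash\psi$.
   Context: $\mathcal{L}$ is a first-order language with countably many predicate, function and constant symbols. Formulas of $RGL^*$ are built from atomic formulas and the nullary connectives $\bar r$ ($r\in[0,1]\cap\mathbb{Q}$, including $\bar0,\bar1$) by $\wedge,\to,\forall,\exists$; $\neg\varphi:=\varphi\to\bar1$, $\varphi\vee\psi:=((\varphi\to\psi)\to\psi)\wedge((\psi\to\varphi)\to\varphi)$, $\varphi\leftrightarrow\psi:=(\varphi\to\psi)\wedge(\psi\to\varphi)$. Proof system $\vdash$: all instances of (G1) $(\varphi\to\psi)\to((\psi\to\chi)\to(\varphi\to\chi))$; (G2) $(\varphi\wedge\psi)\to\varphi$; (G3) $(\varphi\wedge\psi)\to(\psi\wedge\varphi)$; (G4) $\varphi\to(\varphi\wedge\varphi)$; (G5) $(\varphi\to(\psi\to\chi))\leftrightarrow((\varphi\wedge\psi)\to\chi)$; (G6) $((\varphi\to\psi)\to\chi)\to(((\psi\to\varphi)\to\chi)\to\chi)$; (G7) $\bar1\to\varphi$; (G$\forall$1) $(\forall x\,\varphi(x))\to\varphi(t)$; (G$\forall$2) $\forall x(\psi\to\varphi(x))\to(\psi\to\forall x\,\varphi(x))$; (G$\forall$3) $\forall x(\psi\vee\varphi(x))\to(\psi\vee\forall x\,\varphi(x))$; (G$\exists$1) $\varphi(t)\to\exists x\,\varphi(x)$;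 (G$\exists$2) $\exists x(\psi\to\varphi(x))\to(\psi\to\exists x\,\varphi(x))$ (with $t$ substitutable for $x$ and $x$ not free in $\psi$); (RGL1) $(\bar r\wedge\bar s)\leftrightarrow\overline{\max\{r,s\}}$; (RGL2) $\bar r\to\bar s$ if $r\ge s$, $(\bar r\to\bar s)\leftrightarrow\bar s$ if $r<s$; (RGL3) $\neg\neg\bar r$ for $r<1$. Rules: modus ponens and generalization. A theory $T$ is strongly consistent if $T\nvdash\bar r$ for every rational $r\in(0,1]$; it is maximally strongly consistent if it is strongly consistent and every strongly consistent $\mathcal{L}$-theory $\Sigma\supseteq T$ equals $T$. *)

(* Defs.v *)
From Stdlib Require Import QArith Qcanon Vector.

Set Implicit Arguments.
Local Open Scope nat_scope.

Record signature := {
  PredSym : Type;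
  FunSym : Type;
  ConstSym : Type;
  pred_ar : PredSym -> nat;
  fun_ar : FunSym -> nat
}.

Definition countable_type (A : Type) : Prop :=
  exists f : A -> nat, forall x y, f x = f y -> x = y.

Definition countable_sig (L : signature) : Prop :=
  countable_type (PredSym L) /\ countable_type (FunSym L) /\
  countable_type (ConstSym L).

Record rat01 := Rat01 {
  rv : Qc;
  rv_ge0 : (0 <= rv)%Qc;
  rv_le1 : (rv <= 1)%Qc
}.

Lemma Qc_0_le_0 : (0 <= 0)%Qc. Proof. discriminate. Qed.
Lemma Qc_0_le_1 : (0 <= 1)%Qc. Proof. discriminate. Qed.
Lemma Qc_1_le_1 : (1 <= 1)%Qc. Proof. discriminate. Qed.

Definition r0 : rat01 := @Rat01 0%Qc Qc_0_le_0 Qc_0_le_1.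
Definition r1 : rat01 := @Rat01 1%Qc Qc_0_le_1 Qc_1_le_1.

Section Syntax.
Variable L : signature.

Inductive term : Type :=
| Var : nat -> term
| Cst : ConstSym L -> term
| App : forall f : FunSym L, Vector.t term (fun_ar L f) -> term.

Inductive form : Type :=
| Atom : forall p : PredSym L, Vector.t term (pred_ar L p) -> form
| Rc : rat01 -> form
| And : form -> form -> form
| Imp : form -> form -> form
| All : form -> form
| Ex : form -> form.

Fixpoint tsubst (s : nat -> term) (t : term) : term :=
  match t with
  | Var n => s n
  | Cst c => Cst c
  | App f v => App f (Vector.map (tsubst s) v)
  end.

Definition up (s : nat -> term) : nat -> term :=
  fun n => match n with
           | 0 => Var 0
           | S m => tsubst (fun k => Var (S k)) (s m)
           end.

Fixpoint fsubst (s : nat -> term) (A : form) : form :=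
  match A with
  | Atom p v => Atom p (Vector.map (tsubst s) v)
  | Rc r => Rc r
  | And A B => And (fsubst s A) (fsubst s B)
  | Imp A B => Imp (fsubst s A) (fsubst s B)
  | All A => All (fsubst (up s) A)
  | Ex A => Ex (fsubst (up s) A)
  end.

(* shifting all free variables: used for "x not free in psi" *)
Definition shift (A : form) : form := fsubst (fun n => Var (S n)) A.

Definition inst (t : term) (A : form) : form :=
  fsubst (fun n => match n with 0 => t | S m => Var m end) A.

Fixpoint tclosed (n : nat) (t : term) : Prop :=
  match t with
  | Var k => (k < n)%nat
  | Cst _ => True
  | App f v => Vector.fold_right (fun u acc => tclosed n u /\ acc) v True
  end.

Fixpoint fclosed (n : nat) (A : form) : Prop :=
  match A with
  | Atom p v => Vector.fold_right (fun u acc => tclosed n u /\ acc) v True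
  | Rc _ => True
  | And A B => fclosed n A /\ fclosed n B
  | Imp A B => fclosed n A /\ fclosed n B
  | All A => fclosed (S n) A
  | Ex A => fclosed (S n) A
  end.

Definition sentence (A : form) : Prop := fclosed 0 A.

Definition Neg (A : form) : form := Imp A (Rc r1).
Definition Or (A B : form) : form :=
  And (Imp (Imp A B) B) (Imp (Imp B A) A).
Definition Iff (A B : form) : form := And (Imp A B) (Imp B A).

Inductive axiom : form -> Prop :=
| G1 A B C : axiom (Imp (Imp A B) (Imp (Imp B C) (Imp A C)))
| G2 A B : axiom (Imp (And A B) A)
| G3 A B : axiom (Imp (And A B) (And B A))
| G4 A : axiom (Imp A (And A A))
| G5 A B C : axiom (Iff (Imp A (Imp B C)) (Imp (And A B) C))
| G6 A B C : axiom (Imp (Imp (Imp A B) C) (Imp (Imp (Imp B A) C) C))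
| G7 A : axiom (Imp (Rc r1) A)
| GAll1 A t : axiom (Imp (All A) (inst t A))
| GAll2 B A : axiom (Imp (All (Imp (shift B) A)) (Imp B (All A)))
| GAll3 B A : axiom (Imp (All (Or (shift B) A)) (Or B (All A)))
| GEx1 A t : axiom (Imp (inst t A) (Ex A))
| GEx2 B A : axiom (Imp (Ex (Imp (shift B) A)) (Imp B (Ex A)))
(* RGL1: (r /\ s) <-> max{r,s} *)
| RGL1a r s : (rv s <= rv r)%Qc -> axiom (Iff (And (Rc r) (Rc s)) (Rc r))
| RGL1b r s : (rv r <= rv s)%Qc -> axiom (Iff (And (Rc r) (Rc s)) (Rc s))
| RGL2a r s : (rv s <= rv r)%Qc -> axiom (Imp (Rc r) (Rc s))
| RGL2b r s : (rv r < rv s)%Qc -> axiom (Iff (Imp (Rc r) (Rc s)) (Rc s))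
| RGL3 r : (rv r < 1)%Qc -> axiom (Neg (Neg (Rc r))).

Inductive prv (T : form -> Prop) : form -> Prop :=
| prv_ax A : axiom A -> prv T A
| prv_hyp A : T A -> prv T A
| prv_mp A B : prv T A -> prv T (Imp A B) -> prv T B
| prv_gen A : prv T A -> prv T (All A).

Definition theory (T : form -> Prop) : Prop := forall A, T A -> sentence A.

Definition strongly_consistent (T : form -> Prop) : Prop :=
  forall r : rat01, (0 < rv r)%Qc -> ~ prv T (Rc r).

Definition max_strongly_consistent (T : form -> Prop) : Prop :=
  strongly_consistent T /\
  forall S : form -> Prop, theory S -> (forall A, T A -> S A) ->
    strongly_consistent S -> forall A, S A <-> T A.

End Syntax.

(* Main.v *)
Require Import Defs.
From Stdlib Require Import QArith Qcanon Vector.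
From Stdlib Require Import Classical.

Section Proofs.
Variable L : signature.

Fixpoint tsub_cl (t : term L) : forall n s, tclosed n t ->
  (forall k, (k < n)%nat -> s k = Var L k) -> tsubst s t = t :=
  match t with
  | Var _ k => fun n s H Hs => Hs k H
  | Cst _ c => fun _ _ _ _ => eq_refl
  | App f v => fun n s H Hs => f_equal (App f)
      ((fix go m (w : Vector.t (term L) m) :
          Vector.fold_right (fun u acc => tclosed n u /\ acc) w True ->
          Vector.map (tsubst s) w = w :=
        match w with
        | Vector.nil _ => fun _ => eq_refl
        | Vector.cons _ u m' w' => fun H =>
            f_equal2 (fun a b => Vector.cons _ a m' b)
              (tsub_cl u n s (proj1 H) Hs) (go m' w' (proj2 H))
        end) _ v H)
  end.

Lemma fsub_cl (A : form L) : forall n s, fclosed n A ->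
  (forall k, (k < n)%nat -> s k = Var L k) -> fsubst s A = A.
Proof.
  induction A; intros n s H Hs; simpl in *.
  - f_equal. revert H. induction t; simpl; intros H; auto.
    f_equal. apply (tsub_cl h n s (proj1 H) Hs). apply IHt, H.
  - reflexivity.
  - f_equal; [apply (IHA1 n)|apply (IHA2 n)]; tauto.
  - f_equal; [apply (IHA1 n)|apply (IHA2 n)]; tauto.
  - f_equal. apply (IHA (S n)); auto. intros [|k] Hk; simpl; auto.
    rewrite Hs by (apply PeanoNat.Nat.succ_lt_mono; exact Hk). reflexivity.
  - f_equal. apply (IHA (S n)); auto. intros [|k] Hk; simpl; auto.
    rewrite Hs by (apply PeanoNat.Nat.succ_lt_mono; exact Hk). reflexivity.
Qed.

Lemma shift_sent (A : form L) : sentence A -> shift A = A.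
Proof. intro H. unfold shift. apply (fsub_cl A 0); auto. intros k Hk; inversion Hk. Qed.

Variable T : form L -> Prop.

Lemma mp X Y : prv T X -> prv T (Imp X Y) -> prv T Y.
Proof. intros H1 H2; exact (prv_mp H1 H2). Qed.

Lemma ax X : axiom X -> prv T X.
Proof. apply prv_ax. Qed.

Lemma andl X Y : prv T (And X Y) -> prv T X.
Proof. intro H. eapply mp. exact H. apply ax, G2. Qed.
Lemma andr X Y : prv T (And X Y) -> prv T Y.
Proof. intro H. eapply andl. eapply mp. exact H. apply ax, G3. Qed.

Lemma trans X Y Z : prv T (Imp X Y) -> prv T (Imp Y Z) -> prv T (Imp X Z).
Proof. intros H1 H2. eapply mp. exact H2. eapply mp. exact H1. apply ax, G1. Qed.

Lemma idt X : prv T (Imp X X).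
Proof. eapply trans. apply ax, G4. apply ax, G2. Qed.

Lemma kk X C : prv T C -> prv T (Imp X C).
Proof. intro H. eapply mp. exact H. eapply mp. apply ax, (G2 C X).
  eapply andr. apply ax, G5. Qed.

Lemma contr X D : prv T (Imp X (Imp X D)) -> prv T (Imp X D).
Proof. intro H. eapply trans. apply ax, G4. eapply mp. exact H.
  eapply andl. apply ax, G5. Qed.

Lemma mpi X C D : prv T (Imp X C) -> prv T (Imp X (Imp C D)) -> prv T (Imp X D).
Proof. intros H1 H2. apply contr. eapply trans. exact H2.
  eapply mp. exact H1. apply ax, G1. Qed.

End Proofs.

Lemma deduction L (T : form L -> Prop) (A C : form L) : sentence A ->
  prv (fun X => T X \/ X = A) C -> prv T (Imp A C).
Proof.
  intros HA H. induction H.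
  - apply kk. apply prv_ax; auto.
  - destruct H as [H|H]. apply kk, prv_hyp, H. subst. apply idt.
  - eapply mpi; [exact IHprv1 | exact IHprv2].
  - eapply mp. apply prv_gen. exact IHprv.
    pose proof (GAll2 A A0) as G. rewrite (@shift_sent L A HA) in G. apply ax, G.
Qed.

Lemma not_sc L (T : form L -> Prop) : ~ strongly_consistent T ->
  exists r, (0 < rv r)%Qc /\ prv T (Rc L r).
Proof.
  intro H. apply NNPP. intro H2. apply H. intros r Hr Hp. apply H2. eauto.
Qed.

Lemma step L (T : form L -> Prop) A : theory T -> max_strongly_consistent T ->
  sentence A -> ~ prv T A -> exists r, (0 < rv r)%Qc /\ prv T (Imp A (Rc L r)).
Proof.
  intros HT [Hsc Hmax] HA Hn.
  destruct (classic (strongly_consistent (fun X => T X \/ X = A))) as [Hs|Hs].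
  - exfalso. apply Hn. apply prv_hyp.
    assert (Ht : theory (fun X => T X \/ X = A)).
    { intros X [H|H]; [auto|subst; auto]. }
    apply (proj1 (Hmax _ Ht (fun X H => or_introl H) Hs A)). right; reflexivity.
  - destruct (@not_sc L _ Hs) as [r [Hr Hp]]. exists r. split; auto.
    apply deduction; auto.
Qed.

Theorem mainTheorem9 (L : signature) (HL : countable_sig L)
  (T : form L -> Prop) (A B : form L) :
  theory T -> max_strongly_consistent T ->
  sentence A -> sentence B ->
  prv T (Or A B) -> prv T A \/ prv T B.
Proof.
  intros HT Hm HA HB Hor.
  destruct (classic (prv T A)) as [?|Ha]; [now left|].
  destruct (classic (prv T B)) as [?|Hb]; [now right|].
  exfalso.
  destruct (@step L T A HT Hm HA Ha) as [r [Hr Hr']].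
  destruct (@step L T B HT Hm HB Hb) as [s [Hs Hs']].
  assert (exists m, (0 < rv m)%Qc /\ prv T (Imp A (Rc L m)) /\ prv T (Imp B (Rc L m)))
    as [m [Hm0 [HAm HBm]]].
  { destruct (Qclt_le_dec (rv r) (rv s)) as [Hl|Hl].
    - exists r. split; auto. split; auto. eapply trans. exact Hs'.
      apply ax, RGL2a. apply Qclt_le_weak, Hl.
    - exists s. split; auto. split; auto. eapply trans. exact Hr'.
      apply ax, RGL2a. exact Hl. }
  destruct Hm as [Hsc _]. apply (Hsc m Hm0).
  unfold Or in Hor.
  eapply mp. eapply trans. eapply andr. exact Hor. exact HAm.
  eapply mp. eapply trans. eapply andl. exact Hor. exact HBm.
  apply ax, G6.
Qed.
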